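(* Let $A\in\mathbb{M}_m(\mathbb{M}_n)$ be positive semidefinite. Then \[ (\mathrm{tr} A)^{mn}+\big(\det(\mathrm{tr}_1 A)\big)^m\ge m^{mn}\Big(\det A+\big(\det(\mathrm{tr}_2 A)\big)^n\Big), \] and \[ (\mathrm{tr} A)^{mn}+\big(\det(\mathrm{tr}_2 A)\big)^n\ge n^{mn}\Big(\det A+\big(\det(\mathrm{tr}_1 A)\big)^m\Big). \]
   Context: $\mathbb{M}_m(\mathbb{M}_n)$ denotes the set of $mn\times mn$ complex matrices partitioned as $A=[A_{i,j}]_{i,j=1}^m$ with each block $A_{i,j}$ an $n\times n$ complex matrix. The partial traces are $\mathrm{tr}_1 A=\sum_{i=1}^m A_{i,i}\in\mathbb{M}_n$ and $\mathrm{tr}_2 A=[\mathrm{tr}\,A_{i,j}]_{i,j=1}^m\in\mathbb{M}_m$. *)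

(* Defs.v *)
(* Complex numbers: an arbitrary numClosedFieldType C (e.g. algC). *)
From HB Require Import structures.
From mathcomp Require Import all_boot all_order all_algebra.
Set Implicit Arguments. Unset Strict Implicit. Unset Printing Implicit Defensive.
Import Order.TTheory GRing.Theory Num.Theory.
Local Open Scope ring_scope.

Definition adjmx (C : numClosedFieldType) (p q : nat) (M : 'M[C]_(p, q)) : 'M[C]_(q, p) :=
  (map_mx Num.conj M)^T.

Definition psd (C : numClosedFieldType) (N : nat) (A : 'M[C]_N) : Prop :=
  adjmx A = A /\ forall x : 'cV[C]_N, 0 <= (adjmx x *m A *m x) 0 0.

(* A in M_m(M_n) is identified with an (m*n)x(m*n) matrix; the (k,l) entry of
   the block A_{i,j} is A (mxvec_index i k) (mxvec_index j l). *)
Definition blk (C : numClosedFieldType) (m n : nat) (A : 'M[C]_(m * n))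
  (i j : 'I_m) : 'M[C]_n :=
  \matrix_(k < n, l < n) A (mxvec_index i k) (mxvec_index j l).

(* tr_1 A = sum_i A_{i,i} in M_n *)
Definition ptr1 (C : numClosedFieldType) (m n : nat) (A : 'M[C]_(m * n)) : 'M[C]_n :=
  \sum_(i < m) blk A i i.

(* tr_2 A = [tr A_{i,j}]_{i,j} in M_m *)
Definition ptr2 (C : numClosedFieldType) (m n : nat) (A : 'M[C]_(m * n)) : 'M[C]_m :=
  \matrix_(i < m, j < m) \tr (blk A i j).

(* Main.v *)
Require Import Defs.
From HB Require Import structures.
From mathcomp Require Import all_boot all_order all_algebra.
Set Implicit Arguments. Unset Strict Implicit. Unset Printing Implicit Defensive.
Import Order.TTheory GRing.Theory Num.Theory.
Local Open Scope ring_scope.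

Section Adj.
Variable C : numClosedFieldType.

Lemma adjmxE p q (M : 'M[C]_(p, q)) i j : adjmx M i j = (M j i)^*.
Proof. by rewrite /adjmx !mxE. Qed.

Lemma adjmxK p q (M : 'M[C]_(p, q)) : adjmx (adjmx M) = M.
Proof. by apply/matrixP=> i j; rewrite !adjmxE conjCK. Qed.

Lemma adjmxM p q r (A : 'M[C]_(p, q)) (B : 'M[C]_(q, r)) :
  adjmx (A *m B) = adjmx B *m adjmx A.
Proof.
apply/matrixP=> i j; rewrite adjmxE !mxE rmorph_sum /=.
by apply: eq_bigr => k _; rewrite !adjmxE rmorphM /= mulrC.
Qed.

Lemma adjmxD p q (A B : 'M[C]_(p, q)) : adjmx (A + B) = adjmx A + adjmx B.
Proof. by apply/matrixP=> i j; rewrite [LHS]adjmxE [RHS]mxE !adjmxE mxE rmorphD. Qed.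

Lemma adjmx0 p q : adjmx (0 : 'M[C]_(p, q)) = 0.
Proof. by apply/matrixP=> i j; rewrite !adjmxE !mxE rmorph0. Qed.

Lemma adjmx1 p : adjmx (1%:M : 'M[C]_p) = 1%:M.
Proof. by apply/matrixP=> i j; rewrite adjmxE !mxE eq_sym rmorph_nat. Qed.

Lemma adjmx_diag p (d : 'rV[C]_p) : adjmx (diag_mx d) = diag_mx (\row_k (d 0 k)^*).
Proof.
apply/matrixP=> i j; rewrite adjmxE !mxE.
by have [->|ij] := eqVneq i j; rewrite ?eqxx ?(negPf ij) ?mulr1n ?mulr0n ?rmorph0.
Qed.

Lemma adjmx_tstar p q (M : 'M[C]_(p, q)) : adjmx M = (map_mx Num.conj (M^T)).
Proof. by apply/matrixP=> i j; rewrite adjmxE !mxE. Qed.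

Lemma det_adjmx p (M : 'M[C]_p) : \det (adjmx M) = (\det M)^*.
Proof. by rewrite /adjmx det_tr det_map_mx. Qed.

Lemma psd_congr N p (X : 'M[C]_N) (M : 'M[C]_(N, p)) :
  psd X -> psd (adjmx M *m X *m M).
Proof.
move=> [XH Xp]; split.
  by rewrite !adjmxM adjmxK XH mulmxA.
move=> x; have := Xp (M *m x).
by rewrite adjmxM !mulmxA.
Qed.

Lemma psd0 N : psd (0 : 'M[C]_N).
Proof. by split; [rewrite adjmx0 | move=> x; rewrite mulmx0 mul0mx mxE]. Qed.

Lemma psdD N (X Y : 'M[C]_N) : psd X -> psd Y -> psd (X + Y).
Proof.
move=> [XH Xp] [YH Yp]; split; first by rewrite adjmxD XH YH.
move=> x; rewrite mulmxDr mulmxDl mxE; exact: addr_ge0.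
Qed.

Lemma psd_sum N I (r : seq I) (P : pred I) (F : I -> 'M[C]_N) :
  (forall i, P i -> psd (F i)) -> psd (\sum_(i <- r | P i) F i).
Proof.
move=> H; apply: (big_ind (@psd C N)) => //; [exact: psd0 | exact: psdD].
Qed.

Lemma unitary_adj p (P : 'M[C]_p) : P \is unitarymx ->
  P *m adjmx P = 1%:M /\ adjmx P *m P = 1%:M.
Proof.
move=> Pu; have Punit := unitarymx_unit Pu.
have E : adjmx P = invmx P by rewrite invmx_unitary // adjmx_tstar.
by rewrite E mulmxV // mulVmx.
Qed.

Lemma psd_spec N (X : 'M[C]_N) : psd X ->
  exists P : 'M[C]_N, exists d : 'rV[C]_N,
    [/\ P \is unitarymx, forall j, 0 <= d 0 j & X = adjmx P *m diag_mx d *m P].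
Proof.
move=> [XH Xp].
have Xn : X \is normalmx.
  apply/normalmxP; have -> : (X ^t* )%sesqui = adjmx X by rewrite adjmx_tstar.
  by rewrite XH.
have := orthomx_spectralP Xn.
set P := spectralmx X; set d := spectral_diag X => XE.
have Pu : P \is unitarymx by exact: spectral_unitarymx.
have [PP1 P1P] := unitary_adj Pu.
have XE' : X = adjmx P *m diag_mx d *m P.
  by rewrite XE invmx_unitary // adjmx_tstar.
exists P, d; split => // j.
have := Xp (adjmx (row j P)).
have adj_row : adjmx (row j P) = adjmx P *m delta_mx j 0.
  by rewrite -colE; apply/matrixP=> a b; rewrite !adjmxE !mxE.
rewrite adjmxK XE' !mulmxA -row_mul PP1 adj_row rowE mulmx1.
rewrite -!mulmxA (mulmxA P) PP1 mul1mx -colE -rowE.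
by rewrite !mxE eqxx mulr1n.
Qed.

Lemma spec_det N (P : 'M[C]_N) (d : 'rV[C]_N) : P \is unitarymx ->
  \det (adjmx P *m diag_mx d *m P) = \prod_j d 0 j.
Proof.
move=> Pu; have [PP1 _] := unitary_adj Pu.
rewrite !det_mulmx mulrC mulrA -det_mulmx PP1 det1 mul1r det_diag //.
Qed.

Lemma spec_tr N (P : 'M[C]_N) (d : 'rV[C]_N) : P \is unitarymx ->
  \tr (adjmx P *m diag_mx d *m P) = \sum_j d 0 j.
Proof.
move=> Pu; have [PP1 _] := unitary_adj Pu.
by rewrite mxtrace_mulC mulmxA PP1 mul1mx mxtrace_diag.
Qed.

Lemma psd_det_ge0 N (X : 'M[C]_N) : psd X -> 0 <= \det X.
Proof.
move=> /psd_spec [P [d [Pu dge XE]]]; rewrite XE spec_det //.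
by apply: prodr_ge0 => j _.
Qed.

Lemma psd_tr_ge0 N (X : 'M[C]_N) : psd X -> 0 <= \tr X.
Proof.
move=> /psd_spec [P [d [Pu dge XE]]]; rewrite XE spec_tr //.
by apply: sumr_ge0 => j _.
Qed.

Lemma AGM_vec N (d : 'rV[C]_N) : (forall j, 0 <= d 0 j) ->
  (N%:R) ^+ N * \prod_j d 0 j <= (\sum_j d 0 j) ^+ N.
Proof.
case: N d => [|N] d dge.
  by rewrite !expr0 mul1r big_ord0.
have H : \prod_j d 0 j <= ((\sum_j d 0 j) / N.+1%:R) ^+ N.+1.
  have := leif_AGM (A := [pred j : 'I_N.+1 | true]) (E := fun j => d 0 j).
  move=> /(_ (fun j _ => dge j)).
  rewrite cardT size_enum_ord => /leif_le; exact.
apply: le_trans (ler_wpM2l _ H) _; first by rewrite exprn_ge0 ?ler0n.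
rewrite exprMn exprVn mulrCA mulfV ?mulr1 //.
by rewrite expf_neq0 ?pnatr_eq0.
Qed.

Lemma psd_AGM N (X : 'M[C]_N) : psd X -> (N%:R) ^+ N * \det X <= (\tr X) ^+ N.
Proof.
move=> /psd_spec [P [d [Pu dge XE]]]; rewrite XE spec_det // spec_tr //.
exact: AGM_vec.
Qed.
End Adj.
Section Kron.
Variables (C : numClosedFieldType) (m n N : nat).
Variables (e : 'I_m * 'I_n -> 'I_N) (e' : 'I_N -> 'I_m * 'I_n).
Hypotheses (eK : cancel e e') (e'K : cancel e' e).

Lemma sum_e (F : 'I_N -> C) : \sum_p F p = \sum_i \sum_k F (e (i, k)).
Proof.
rewrite (reindex e); last by exists e' => x _; [apply: eK | apply: e'K].
by rewrite pair_big /=; apply: eq_bigr => -[].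
Qed.

Lemma prod_e (F : 'I_N -> C) : \prod_p F p = \prod_i \prod_k F (e (i, k)).
Proof.
rewrite (reindex e); last by exists e' => x _; [apply: eK | apply: e'K].
by rewrite pair_big /=; apply: eq_bigr => -[].
Qed.

Lemma sum_delta c (F : 'I_N -> C) : \sum_p ((e' p == c)%:R * F p) = F (e c).
Proof.
rewrite (bigD1 (e c)) //= eK eqxx mul1r big1 ?addr0 // => p ne.
have -> : (e' p == c) = false.
  by apply/negP => /eqP E; move: ne; rewrite -E e'K eqxx.
by rewrite mul0r.
Qed.

Lemma sum_delta_r c (F : 'I_N -> C) : \sum_p (F p * (e' p == c)%:R) = F (e c).
Proof. by rewrite -(sum_delta c); apply: eq_bigr => p _; rewrite mulrC. Qed.

Definition kron (S : 'M[C]_n) : 'M[C]_N :=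
  \matrix_(p, q) (((e' p).1 == (e' q).1)%:R * S (e' p).2 (e' q).2).

Lemma kronE S i k j l : kron S (e (i, k)) (e (j, l)) = (i == j)%:R * S k l.
Proof. by rewrite /kron mxE !eK. Qed.

Lemma mx_e (X Y : 'M[C]_N) :
  (forall i k j l, X (e (i, k)) (e (j, l)) = Y (e (i, k)) (e (j, l))) -> X = Y.
Proof.
move=> H; apply/matrixP => p q; rewrite -[p]e'K -[q]e'K.
by case: (e' p) => i k; case: (e' q) => j l; apply: H.
Qed.

Lemma kron_mul S T : kron S *m kron T = kron (S *m T).
Proof.
apply: mx_e => i k j l; rewrite kronE [LHS]mxE sum_e.
rewrite (bigD1 i) //= [X in _ + X]big1 ?addr0; last first.
  move=> i' ne; apply: big1 => k' _.
  by rewrite !kronE eq_sym (negPf ne) !mul0r.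
rewrite mxE mulr_sumr; apply: eq_bigr => k' _.
rewrite !kronE eqxx mul1r.
by case: (i == j); rewrite ?mul1r ?mul0r ?mulr0.
Qed.

Lemma kron1 : kron 1%:M = 1%:M.
Proof.
apply: mx_e => i k j l; rewrite kronE !mxE.
rewrite (inj_eq (can_inj eK)) xpair_eqE.
by case: (i == j); case: (k == l); rewrite ?mul1r ?mul0r.
Qed.

Lemma kron_diag (w : 'rV[C]_n) :
  kron (diag_mx w) = diag_mx (\row_p w 0 (e' p).2).
Proof.
apply: mx_e => i k j l; rewrite kronE !mxE eK.
rewrite (inj_eq (can_inj eK)) xpair_eqE.
by case: (i == j); case: (k == l); rewrite ?mul1r ?mul0r ?mulr0n ?mulr1n.
Qed.

Lemma adjmx_kron S : adjmx (kron S) = kron (adjmx S).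
Proof.
apply: mx_e => i k j l; rewrite adjmxE !kronE adjmxE rmorphM rmorph_nat /=.
by rewrite eq_sym.
Qed.

Lemma det_kron_diag (w : 'rV[C]_n) :
  \det (kron (diag_mx w)) = (\prod_k w 0 k) ^+ m.
Proof.
rewrite kron_diag det_diag prod_e.
under eq_bigr => i _ do under eq_bigr => k _ do rewrite mxE eK /=.
by rewrite prodr_const card_ord.
Qed.

Definition Bmat (A : 'M[C]_N) : 'M[C]_n :=
  \matrix_(k, l) \sum_i A (e (i, k)) (e (i, l)).

Definition Emb (i : 'I_m) : 'M[C]_(N, n) := \matrix_(p, k) (e' p == (i, k))%:R.

Lemma B_sum A : Bmat A = \sum_i adjmx (Emb i) *m A *m Emb i.
Proof.
apply/matrixP => k l; rewrite mxE summxE; apply: eq_bigr => i _.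
rewrite mxE.
under eq_bigr => q _ do rewrite mxE.
under eq_bigr => q _ do under eq_bigr => p _ do rewrite adjmxE mxE rmorph_nat.
under eq_bigr => q _ do rewrite sum_delta.
under eq_bigr => q _ do rewrite mxE.
by rewrite sum_delta_r.
Qed.

Lemma psd_B A : psd A -> psd (Bmat A).
Proof.
move=> Ap; rewrite B_sum; apply: psd_sum => i _; exact: psd_congr.
Qed.

Lemma tr_kron A T : \tr (A *m kron T) = \tr (Bmat A *m T).
Proof.
have H i k : (A *m kron T) (e (i, k)) (e (i, k)) =
    \sum_l A (e (i, k)) (e (i, l)) * T l k.
  rewrite mxE sum_e (bigD1 i) //= [X in _ + X]big1 ?addr0.
    by apply: eq_bigr => l _; rewrite kronE eqxx mul1r.
  by move=> j ne; apply: big1 => l _; rewrite kronE (negPf ne) mul0r mulr0.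
rewrite /mxtrace sum_e.
under eq_bigr => i _ do under eq_bigr => k _ do rewrite H.
under [RHS]eq_bigr => k _ do rewrite mxE.
under [RHS]eq_bigr => k _ do under eq_bigr => l _ do rewrite mxE mulr_suml.
under [RHS]eq_bigr => k _ do rewrite exchange_big.
by rewrite exchange_big.
Qed.

Lemma tr_B A : \tr (Bmat A) = \tr A.
Proof. by have := tr_kron A 1%:M; rewrite kron1 !mulmx1. Qed.

Lemma weighted A (Ap : psd A) (P : 'M[C]_n) (d : 'rV[C]_n) :
  P \is unitarymx -> Bmat A = adjmx P *m diag_mx d *m P ->
  forall w : 'rV[C]_n, (forall k, 0 <= w 0 k) ->
  (N%:R) ^+ N * (\det A * (\prod_k w 0 k) ^+ m) <= (\sum_k d 0 k * w 0 k) ^+ N.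
Proof.
move=> Pu BE w wge; have [PP1 P1P] := unitary_adj Pu.
pose lam := \row_k sqrtC (w 0 k).
pose S := diag_mx lam *m P.
pose M := kron S.
have Xp : psd (M *m A *m adjmx M).
  by have := psd_congr (adjmx M) Ap; rewrite adjmxK.
have SS : adjmx S *m S = adjmx P *m diag_mx w *m P.
  rewrite adjmxM adjmx_diag -mulmxA (mulmxA (diag_mx _)) mulmx_diag mulmxA.
  congr (_ *m diag_mx _ *m _); apply/matrixP => i k; rewrite (ord1 i) !mxE.
  by rewrite geC0_conj ?sqrtC_ge0 // -expr2 sqrtCK.
have MM : adjmx M *m M = kron (adjmx P *m diag_mx w *m P).
  by rewrite adjmx_kron kron_mul SS.
have detX : \det (M *m A *m adjmx M) = \det A * (\prod_k w 0 k) ^+ m.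
  rewrite !det_mulmx mulrAC mulrC [\det M * _]mulrC -det_mulmx MM -!kron_mul.
  rewrite !det_mulmx det_kron_diag mulrAC -det_mulmx kron_mul P1P kron1 det1.
  by rewrite mul1r.
have trX : \tr (M *m A *m adjmx M) = \sum_k d 0 k * w 0 k.
  rewrite mxtrace_mulC mulmxA MM mxtrace_mulC tr_kron BE.
  have -> : adjmx P *m diag_mx d *m P *m (adjmx P *m diag_mx w *m P) =
      adjmx P *m diag_mx (\row_j (d 0 j * w 0 j)) *m P.
    by rewrite -mulmx_diag !mulmxA -[adjmx P *m diag_mx d *m P *m adjmx P]mulmxA PP1 mulmx1.
  by rewrite spec_tr //; apply: eq_bigr => k _; rewrite mxE.
by have := psd_AGM Xp; rewrite detX trX.
Qed.

End Kron.

Lemma det_N0 (C : numClosedFieldType) N (A : 'M[C]_N) : N = 0%N -> \det A = 1.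
Proof. by move=> E; subst N; rewrite det_mx00. Qed.

Section Key.
Variables (C : numClosedFieldType) (m n N : nat).
Variables (e : 'I_m * 'I_n -> 'I_N) (e' : 'I_N -> 'I_m * 'I_n).
Hypotheses (eK : cancel e e') (e'K : cancel e' e) (eN : N = (m * n)%N).

Lemma key (A : 'M[C]_N) : psd A ->
  (m%:R) ^+ N * \det A <= (\det (Bmat e A)) ^+ m.
Proof.
move=> Ap.
have [P [d [Pu dge BE]]] := psd_spec (psd_B eK e'K Ap).
have detB : \det (Bmat e A) = \prod_k d 0 k by rewrite BE spec_det.
have dA := psd_det_ge0 Ap.
have W := weighted eK e'K Ap Pu BE.
rewrite detB.
have [k0 /eqP dk0 | dnz] := pickP (fun k => d 0 k == 0).
  have -> : \prod_k d 0 k = 0 by rewrite (bigD1 k0) //= dk0 mul0r.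
  have [m0 | mpos] := posnP m.
    have N0 : N = 0%N by rewrite eN m0.
    by rewrite (det_N0 A N0) N0 m0 !expr0 mulr1.
  have eN' := eN; have W' := W.
  rewrite expr0n -[m == 0%N]negbK -lt0n mpos /=.
  suff -> : \det A = 0 by rewrite mulr0.
  apply/eqP; apply: contraT => dA0.
  have dApos : 0 < \det A by rewrite lt_def dA0 dA.
  pose c := \sum_k d 0 k.
  have c0 : 0 <= c by apply: sumr_ge0 => k _.
  pose t : C := c ^+ N / \det A + 1.
  have t1 : 1 <= t by rewrite /t lerDr divr_ge0 ?exprn_ge0 // ltW.
  pose w := \row_k (if k == k0 then t else 1 : C).
  have := W' w.
  have wge : forall k, 0 <= w 0 k.
    by move=> k; rewrite mxE; case: (k == k0) => //; apply: le_trans t1.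
  move=> /(_ wge).
  have -> : \sum_k d 0 k * w 0 k = c.
    apply: eq_bigr => k _; rewrite mxE; case: eqP => [->|_]; last by rewrite mulr1.
    by rewrite dk0 mul0r.
  have -> : \prod_k w 0 k = t.
    rewrite (bigD1 k0) //= mxE eqxx big1 ?mulr1 // => k kk0.
    by rewrite mxE (negPf kk0).
  move=> H.
  have N1 : 1 <= (N%:R : C) ^+ N.
    apply: exprn_ege1; rewrite ler1n eN' muln_gt0 /=.
    by rewrite mpos /=; case: k0 {dk0 wge H w} => k Hk; apply: leq_ltn_trans Hk.
  have : c ^+ N + \det A <= c ^+ N.
    apply: le_trans H.
    have -> : c ^+ N + \det A = \det A * t.
      by rewrite /t mulrDr mulr1 mulrCA divff ?mulr1 // gt_eqF.
    have t0 : 0 <= t by apply: le_trans t1.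
    apply: (le_trans _ (ler_peMl _ N1)); last by rewrite mulr_ge0 // exprn_ge0.
    by apply: ler_wpM2l => //; exact: ler_eXnr.
  by rewrite gerDl => /(lt_le_trans dApos); rewrite ltxx.
pose w := \row_k (d 0 k)^-1.
have wge : forall k, 0 <= w 0 k by move=> k; rewrite mxE invr_ge0.
have := W w wge.
have -> : \sum_k d 0 k * w 0 k = n%:R.
  under eq_bigr => k _ do rewrite mxE mulfV ?(negbT (dnz k)) //.
  by rewrite sumr_const card_ord.
have -> : \prod_k w 0 k = (\prod_k d 0 k)^-1.
  by rewrite -prodfV; apply: eq_bigr => k _; rewrite mxE.
set D := \prod_k d 0 k.
have Dnz : D != 0 by apply/prodf_neq0 => k _; exact: negbT (dnz k).
have Dpos : 0 < D by rewrite lt_def Dnz prodr_ge0.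
move=> H.
have H' : N%:R ^+ N * \det A <= n%:R ^+ N * D ^+ m.
  rewrite -(ler_pM2r (exprn_gt0 m Dpos)) in H.
  move: H; rewrite exprVn -!mulrA mulVf ?mulr1 //.
  by rewrite expf_neq0.
have [n0 | npos] := posnP n.
  have N0 : N = 0%N by rewrite eN n0 muln0.
  by move: H'; rewrite (det_N0 A N0) N0 !expr0 !mul1r.
have NR : (N%:R : C) = m%:R * n%:R by rewrite eN natrM.
move: H'; rewrite NR exprMn [_ ^+ _ * n%:R ^+ _]mulrC -mulrA ler_pM2l //.
by rewrite exprn_gt0 // ltr0n.
Qed.

End Key.

Lemma AGMpow (C : numClosedFieldType) p q (X : 'M[C]_p) : psd X ->
  (p%:R) ^+ (p * q) * (\det X) ^+ q <= (\tr X) ^+ (p * q).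
Proof.
move=> Xp; have H := psd_AGM Xp.
have := @lerXn2r _ q _ _ _ _ H.
rewrite exprMn -!exprM; apply.
  by rewrite nnegrE mulr_ge0 ?exprn_ge0 ?ler0n ?psd_det_ge0.
by rewrite nnegrE exprn_ge0 ?psd_tr_ge0.
Qed.

Section Inst.
Variables (m n : nat).
Definition e1 (p : 'I_m * 'I_n) : 'I_(m * n) := mxvec_index p.1 p.2.
Definition e1' (q : 'I_(m * n)) : 'I_m * 'I_n :=
  enum_val (cast_ord (esym (mxvec_cast m n)) q).
Lemma e1K : cancel e1 e1'.
Proof. by case=> i j; rewrite /e1 /e1' /mxvec_index cast_ordK enum_rankK. Qed.
Lemma e1'K : cancel e1' e1.
Proof.
move=> q; rewrite /e1 /e1' /mxvec_index -surjective_pairing enum_valK.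
by rewrite cast_ordKV.
Qed.
Definition e2 (p : 'I_n * 'I_m) : 'I_(m * n) := mxvec_index p.2 p.1.
Definition e2' (q : 'I_(m * n)) : 'I_n * 'I_m := ((e1' q).2, (e1' q).1).
Lemma e2K : cancel e2 e2'.
Proof. by case=> k i; rewrite /e2 /e2' -[mxvec_index i k]/(e1 (i, k)) e1K. Qed.
Lemma e2'K : cancel e2' e2.
Proof. by move=> q; rewrite /e2 /e2' /= -[X in _ = X]e1'K; case: (e1' q). Qed.

Lemma ptr1E (C : numClosedFieldType) (A : 'M[C]_(m * n)) : ptr1 A = Bmat e1 A.
Proof.
apply/matrixP => k l; rewrite /ptr1 summxE mxE; apply: eq_bigr => i _.
by rewrite /blk mxE.
Qed.

Lemma ptr2E (C : numClosedFieldType) (A : 'M[C]_(m * n)) : ptr2 A = Bmat e2 A.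
Proof.
apply/matrixP => i j; rewrite /ptr2 !mxE /mxtrace; apply: eq_bigr => k _.
by rewrite /blk mxE.
Qed.
End Inst.

Theorem theorem4p7 (C : numClosedFieldType) (m n : nat) (A : 'M[C]_(m * n)) :
  psd A ->
  ((\tr A) ^+ (m * n) + (\det (ptr1 A)) ^+ m
     >= (m%:R) ^+ (m * n) * (\det A + (\det (ptr2 A)) ^+ n))
  /\
  ((\tr A) ^+ (m * n) + (\det (ptr2 A)) ^+ n
     >= (n%:R) ^+ (m * n) * (\det A + (\det (ptr1 A)) ^+ m)).
Proof.
move=> Ap.
have P1 : psd (ptr1 A) by rewrite ptr1E; exact: (psd_B (@e1K m n) (@e1'K m n) Ap).
have P2 : psd (ptr2 A) by rewrite ptr2E; exact: (psd_B (@e2K m n) (@e2'K m n) Ap).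
have T1 : \tr (ptr1 A) = \tr A by rewrite ptr1E (tr_B (@e1K m n) (@e1'K m n)).
have T2 : \tr (ptr2 A) = \tr A by rewrite ptr2E (tr_B (@e2K m n) (@e2'K m n)).
have K1 : (m%:R) ^+ (m * n) * \det A <= (\det (ptr1 A)) ^+ m.
  by rewrite ptr1E; exact: (key (@e1K m n) (@e1'K m n) (erefl _) Ap).
have K2 : (n%:R) ^+ (m * n) * \det A <= (\det (ptr2 A)) ^+ n.
  by rewrite ptr2E; exact: (key (@e2K m n) (@e2'K m n) (mulnC m n) Ap).
split.
  rewrite mulrDr [X in _ <= X]addrC; apply: lerD => //.
  by rewrite -T2; exact: AGMpow.
rewrite mulrDr [X in _ <= X]addrC; apply: lerD => //.
by rewrite -T1 mulnC; exact: AGMpow.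
Qed.
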